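(* Let $(\mathcal{S},\widehat{\mathcal{S}},\sigma,\tau,\iota)$ be a duplicated category of sets. Then the functors $\sigma:\mathcal{S}\to\widehat{\mathcal{S}}$ and $\tau:\mathcal{S}\to\widehat{\mathcal{S}}$ are faithful.
   Context: A duplicated category of sets is a quintet $(\mathcal{S},\widehat{\mathcal{S}},\sigma,\tau,\iota)$ such that: (i) $\mathcal{S}$ and $\widehat{\mathcal{S}}$ are categories satisfying Lawvere's axioms of the Elementary Theory of the Category of Sets (ETCS), i.e. each is a well-pointed topos with a natural numbers object satisfying the axiom of choice; (ii) $\sigma:\mathcal{S}\to\widehat{\mathcal{S}}$ is a functor preserving all finite limits, the subobject classifier $2$, exponentials and natural numbers objects; (iii) $\tau:\mathcal{S}\to\widehat{\mathcal{S}}$ is a functor preserving all finite limits; (iv) $\iota:\sigma\to\tau$ is a natural transformation such that $\iota_X=\mathrm{id}_{\sigma(X)}=\mathrm{id}_{\tau(X)}$ for every finite object $X$ of $\mathcal{S}$. *)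

(* Defs.v *)
Set Implicit Arguments.
Unset Strict Implicit.

Record Category := {
  Ob :> Type;
  Hom : Ob -> Ob -> Type;
  idm : forall A, Hom A A;
  comp : forall A B C, Hom B C -> Hom A B -> Hom A C;
  comp_assoc : forall A B C D (h : Hom C D) (g : Hom B C) (f : Hom A B),
      comp h (comp g f) = comp (comp h g) f;
  comp_id_l : forall A B (f : Hom A B), comp (idm B) f = f;
  comp_id_r : forall A B (f : Hom A B), comp f (idm A) = f
}.

Arguments Hom {C} A B : rename.
Arguments idm {C} A : rename.
Arguments comp {C A B C0} g f : rename.

Notation "g \o' f" := (comp g f) (at level 40, left associativity).

Section Cat.
Variable C : Category.

Definition is_terminal (T : C) : Prop :=
  forall X : C, exists f : Hom X T, forall g : Hom X T, g = f.

Definition is_product (A B P : C) (p1 : Hom P A) (p2 : Hom P B) : Prop :=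
  forall (X : C) (f : Hom X A) (g : Hom X B),
    exists h : Hom X P, (p1 \o' h = f /\ p2 \o' h = g) /\
      forall h' : Hom X P, p1 \o' h' = f -> p2 \o' h' = g -> h' = h.

Definition is_equalizer (A B E : C) (f g : Hom A B) (e : Hom E A) : Prop :=
  f \o' e = g \o' e /\
  forall (X : C) (h : Hom X A), f \o' h = g \o' h ->
    exists k : Hom X E, e \o' k = h /\ forall k', e \o' k' = h -> k' = k.

Definition is_pullback (A B Z P : C) (f : Hom A Z) (g : Hom B Z)
    (p1 : Hom P A) (p2 : Hom P B) : Prop :=
  f \o' p1 = g \o' p2 /\
  forall (X : C) (a : Hom X A) (b : Hom X B), f \o' a = g \o' b ->
    exists h : Hom X P, (p1 \o' h = a /\ p2 \o' h = b) /\
      forall h', p1 \o' h' = a -> p2 \o' h' = b -> h' = h.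

Definition is_mono (A B : C) (m : Hom A B) : Prop :=
  forall (X : C) (f g : Hom X A), m \o' f = m \o' g -> f = g.

Definition is_epi (A B : C) (e : Hom A B) : Prop :=
  forall (X : C) (f g : Hom B X), f \o' e = g \o' e -> f = g.

Definition is_iso (A B : C) (f : Hom A B) : Prop :=
  exists g : Hom B A, g \o' f = idm A /\ f \o' g = idm B.

Definition has_finite_limits : Prop :=
  (exists T : C, is_terminal T) /\
  (forall A B : C, exists (P : C) (p1 : Hom P A) (p2 : Hom P B), is_product p1 p2) /\
  (forall (A B : C) (f g : Hom A B), exists (E : C) (e : Hom E A), is_equalizer f g e).

(* E (with evaluation ev : P -> B, where (P, p1, p2) is a product E x A)
   is an exponential B^A *)
Definition is_exponential (A B E P : C) (p1 : Hom P E) (p2 : Hom P A)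
    (ev : Hom P B) : Prop :=
  is_product p1 p2 /\
  forall (X Q : C) (q1 : Hom Q X) (q2 : Hom Q A), is_product q1 q2 ->
    forall h : Hom Q B,
      exists l : Hom X E,
        (forall k : Hom Q P, p1 \o' k = l \o' q1 -> p2 \o' k = q2 -> ev \o' k = h) /\
        (forall l' : Hom X E,
           (forall k : Hom Q P, p1 \o' k = l' \o' q1 -> p2 \o' k = q2 -> ev \o' k = h) ->
           l' = l).

Definition is_cartesian_closed : Prop :=
  forall A B : C, exists (E P : C) (p1 : Hom P E) (p2 : Hom P A) (ev : Hom P B),
    is_exponential p1 p2 ev.

Definition is_subobject_classifier (T Omega : C) (t : Hom T Omega) : Prop :=
  is_terminal T /\
  forall (U X : C) (m : Hom U X), is_mono m ->
    exists chi : Hom X Omega,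
      (forall u : Hom U T, is_pullback chi t m u) /\
      (forall chi' : Hom X Omega, (forall u : Hom U T, is_pullback chi' t m u) -> chi' = chi).

Definition is_topos : Prop :=
  has_finite_limits /\ is_cartesian_closed /\
  exists (T Omega : C) (t : Hom T Omega), is_subobject_classifier t.

Definition is_NNO (T N : C) (z : Hom T N) (s : Hom N N) : Prop :=
  is_terminal T /\
  forall (X : C) (x : Hom T X) (f : Hom X X),
    exists u : Hom N X, (u \o' z = x /\ u \o' s = f \o' u) /\
      forall u', u' \o' z = x -> u' \o' s = f \o' u' -> u' = u.

Definition has_NNO : Prop :=
  exists (T N : C) (z : Hom T N) (s : Hom N N), is_NNO z s.

Definition is_well_pointed : Prop :=
  (exists (X Y : C) (f g : Hom X Y), f <> g) /\
  (forall T : C, is_terminal T ->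
     forall (X Y : C) (f g : Hom X Y),
       (forall x : Hom T X, f \o' x = g \o' x) -> f = g).

Definition has_choice : Prop :=
  forall (X Y : C) (e : Hom X Y), is_epi e -> exists s : Hom Y X, e \o' s = idm Y.

Definition ETCS : Prop :=
  is_topos /\ is_well_pointed /\ has_NNO /\ has_choice.

(* finite object (Dedekind finiteness) *)
Definition is_finite_object (X : C) : Prop :=
  forall m : Hom X X, is_mono m -> is_iso m.

End Cat.

Record Functor (C D : Category) := {
  F_ob :> C -> D;
  F_hom : forall A B : C, Hom A B -> Hom (F_ob A) (F_ob B);
  F_id : forall A : C, F_hom (idm A) = idm (F_ob A);
  F_comp : forall (A B E : C) (g : Hom B E) (f : Hom A B),
      F_hom (g \o' f) = F_hom g \o' F_hom f
}.

Arguments F_hom {C D} f {A B} f0 : rename.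

Record NatTrans (C D : Category) (F G : Functor C D) := {
  nt_comp :> forall X : C, Hom (F X) (G X);
  nt_nat : forall (X Y : C) (f : Hom X Y),
      nt_comp Y \o' F_hom F f = F_hom G f \o' nt_comp X
}.

Section Func.
Variables (C D : Category) (F : Functor C D).

Definition is_faithful : Prop :=
  forall (A B : C) (f g : Hom A B), F_hom F f = F_hom F g -> f = g.

Definition preserves_finite_limits : Prop :=
  (forall T : C, is_terminal T -> is_terminal (F T)) /\
  (forall (A B P : C) (p1 : Hom P A) (p2 : Hom P B),
     is_product p1 p2 -> is_product (F_hom F p1) (F_hom F p2)) /\
  (forall (A B E : C) (f g : Hom A B) (e : Hom E A),
     is_equalizer f g e -> is_equalizer (F_hom F f) (F_hom F g) (F_hom F e)).

Definition preserves_subobject_classifier : Prop :=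
  forall (T Omega : C) (t : Hom T Omega),
    is_subobject_classifier t -> is_subobject_classifier (F_hom F t).

Definition preserves_exponentials : Prop :=
  forall (A B E P : C) (p1 : Hom P E) (p2 : Hom P A) (ev : Hom P B),
    is_exponential p1 p2 ev ->
    is_exponential (F_hom F p1) (F_hom F p2) (F_hom F ev).

Definition preserves_NNO : Prop :=
  forall (T N : C) (z : Hom T N) (s : Hom N N),
    is_NNO z s -> is_NNO (F_hom F z) (F_hom F s).

End Func.

(* [is_identity_component a] : a : Hom X Y is an identity morphism,
   i.e. X = Y and a is id_X transported along that equality *)
Definition is_identity_component (D : Category) (X Y : D) (a : Hom X Y) : Prop :=
  exists e : X = Y,
    match e in _ = Z return Hom X Z with eq_refl => idm X end = a.

Definition duplicated_category_of_sets (S Sh : Category)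
    (sigma tau : Functor S Sh) (iota : NatTrans sigma tau) : Prop :=
  ETCS S /\ ETCS Sh /\
  (preserves_finite_limits sigma /\ preserves_subobject_classifier sigma /\
   preserves_exponentials sigma /\ preserves_NNO sigma) /\
  preserves_finite_limits tau /\
  (forall X : S, is_finite_object X -> is_identity_component (iota X)).

(* Main.v *)
Require Import Defs.
From Stdlib Require Import Classical.
Set Implicit Arguments.

Lemma term_eq (C : Category) (T : C) : is_terminal T ->
  forall (X : C) (f g : Hom X T), f = g.
Proof. intros HT X f g. destruct (HT X) as [h Hh]. rewrite (Hh f), (Hh g). reflexivity. Qed.

Lemma prod_term (C : Category) (T A : C) (HT : is_terminal T) (bang : Hom A T) :
  is_product bang (idm A).
Proof.
  intros X f g. exists g. split.
  - split; [apply term_eq; exact HT | apply comp_id_l].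
  - intros h' _ H2. rewrite comp_id_l in H2. exact H2.
Qed.

Lemma eq_mono (C : Category) (A B E : C) (f g : Hom A B) (e : Hom E A) :
  is_equalizer f g e -> is_mono e.
Proof.
  intros [He Hu] X a b Hab.
  assert (H : f \o' (e \o' a) = g \o' (e \o' a)).
  { rewrite !comp_assoc, He. reflexivity. }
  destruct (Hu X _ H) as [k [_ Hk]].
  rewrite (Hk a eq_refl), (Hk b (eq_sym Hab)). reflexivity.
Qed.

Lemma two_points (C : Category) (T Om : C) (t : Hom T Om) :
  is_well_pointed C -> has_finite_limits C -> is_subobject_classifier t ->
  exists u v : Hom T Om, u <> v.
Proof.
  intros [[X [Y [f [g Hfg]]]] Hwp] [_ [_ Heq]] [HT Hcl].
  destruct (Heq X Y f g) as [M [m Hm]].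
  destruct (Hcl M X m (eq_mono Hm)) as [chi [Hchi _]].
  destruct (HT M) as [uM _]. destruct (HT X) as [bX _].
  assert (Hne : chi <> t \o' bX).
  { intro E. destruct (Hchi uM) as [_ Hpb].
    assert (H0 : chi \o' idm X = t \o' bX) by (rewrite comp_id_r; exact E).
    destruct (Hpb X (idm X) bX H0) as [h [[Hh _] _]].
    apply Hfg. destruct Hm as [Hm _].
    rewrite <- (comp_id_r f), <- (comp_id_r g), <- Hh, !comp_assoc, Hm. reflexivity. }
  apply NNPP. intro Hn. apply Hne. apply (Hwp T HT). intro x.
  apply NNPP. intro Hx. apply Hn. exists (chi \o' x), (t \o' bX \o' x). exact Hx.
Qed.

Lemma key (S Sh : Category) (F : Functor S Sh) :
  ETCS S -> ETCS Sh -> preserves_finite_limits F ->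
  preserves_subobject_classifier F -> preserves_exponentials F ->
  forall (T E : S), is_terminal T -> (forall p : Hom T E, False) ->
  Hom (F T) (F E) -> False.
Proof.
  intros [[HlS [HccS [T0 [Om [t Hcl]]]]] [[_ HwpS] _]]
         [[HlSh _] [HwpSh _]] [HFterm _] HFcl HFexp T E HT Hpl q.
  destruct (HccS E Om) as [X [P [p1 [p2 [ev Hexp]]]]].
  pose proof Hcl as [HT0 _].
  destruct (HT0 E) as [bE0 _].
  destruct (HT E) as [bE _].
  assert (Hpts : forall l1 l2 : Hom T X, l1 = l2).
  { intros l1 l2. destruct Hexp as [Hprod Hex].
    destruct (Hprod E (l1 \o' bE) (idm E)) as [k1 [[Hk11 Hk12] Hk1u]].
    destruct (Hprod E (l2 \o' bE) (idm E)) as [k2 [[Hk21 Hk22] Hk2u]].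
    destruct (Hex T E bE (idm E) (@prod_term _ _ _ HT bE) (ev \o' k1)) as [l [_ Hlu]].
    rewrite (Hlu l1), (Hlu l2); [reflexivity| |].
    - intros k Ha Hb. rewrite (Hk2u k Ha Hb).
      apply (HwpS T HT). intro x. destruct (Hpl x).
    - intros k Ha Hb. rewrite (Hk1u k Ha Hb). reflexivity. }
  assert (HXt : is_terminal X).
  { intro Z. destruct Hexp as [_ Hex].
    destruct (Hex T E bE (idm E) (@prod_term _ _ _ HT bE) (t \o' bE0)) as [l0 _].
    destruct (HT Z) as [bZ _].
    exists (l0 \o' bZ). intro g. apply (HwpS T HT). intro z. apply Hpts. }
  pose proof (HFterm X HXt) as HFX.
  pose proof (HFcl _ _ _ Hcl) as HFcl'.
  destruct (two_points HwpSh HlSh HFcl') as [u [v Huv]].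
  pose proof HFcl' as [HFT0 _].
  pose proof (HFexp _ _ _ _ _ _ _ Hexp) as [HFprod HFex].
  destruct (HFT0 (F E)) as [bFE _].
  assert (Hcomp : u \o' bFE = v \o' bFE).
  { destruct (HFex (F T0) (F E) bFE (idm (F E)) (@prod_term _ _ _ HFT0 bFE) (u \o' bFE))
      as [l1 [Hl1 _]].
    destruct (HFex (F T0) (F E) bFE (idm (F E)) (@prod_term _ _ _ HFT0 bFE) (v \o' bFE))
      as [l2 [Hl2 _]].
    destruct (HFprod (F E) (l1 \o' bFE) (idm (F E))) as [k [[Hk1 Hk2] _]].
    rewrite <- (Hl1 k Hk1 Hk2). apply Hl2; [|exact Hk2].
    rewrite Hk1. rewrite (@term_eq _ _ HFX _ l1 l2). reflexivity. }
  destruct (HFterm T HT (F T0)) as [c _].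
  apply Huv.
  assert (Hid : bFE \o' (q \o' c) = idm (F T0)) by apply (@term_eq _ _ HFT0).
  rewrite <- (comp_id_r u), <- (comp_id_r v), <- Hid, !comp_assoc, Hcomp.
  reflexivity.
Qed.

Lemma faithful_of (S Sh : Category) (F : Functor S Sh) :
  ETCS S -> preserves_finite_limits F ->
  (forall (T E : S), is_terminal T -> (Hom T E -> False) -> is_finite_object E ->
     is_finite_object T -> Hom (F T) (F E) -> False) ->
  is_faithful F.
Proof.
  intros [[[[T HT] [_ Heq]] _] [[_ Hwp] _]] [_ [_ HFeq]] Hkey A B f g Hfg.
  apply (Hwp T HT). intro x. apply NNPP. intro Hne.
  destruct (Heq T B (f \o' x) (g \o' x)) as [E [e He]].
  pose proof (HFeq _ _ _ _ _ _ He) as [_ HFu].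
  assert (H1 : F_hom F (f \o' x) \o' idm (F T) = F_hom F (g \o' x) \o' idm (F T)).
  { rewrite !F_comp, Hfg. reflexivity. }
  destruct (HFu _ _ H1) as [k _].
  assert (Hfin : forall Z : S, (Hom T Z -> False) -> is_finite_object Z).
  { intros Z HZ m _. exists (idm Z).
    assert (Hm : m = idm Z) by (apply (Hwp T HT); intro z; destruct (HZ z)).
    rewrite Hm, comp_id_l. split; reflexivity. }
  assert (HTfin : is_finite_object T).
  { intros m _. exists (idm T). split; apply (@term_eq _ _ HT). }
  assert (Hpl : Hom T E -> False).
  { intro p. apply Hne. destruct He as [He _].
    assert (Hep : e \o' p = idm T) by apply (@term_eq _ _ HT).
    rewrite <- (comp_id_r (f \o' x)), <- (comp_id_r (g \o' x)), <- Hep, !comp_assoc.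
    rewrite He. reflexivity. }
  exact (Hkey T E HT Hpl (Hfin E Hpl) HTfin k).
Qed.

Theorem mainTheorem1 (S Sh : Category) (sigma tau : Functor S Sh)
    (iota : NatTrans sigma tau) :
  duplicated_category_of_sets iota ->
  is_faithful sigma /\ is_faithful tau.
Proof.
  intros [HS [HSh [[Hsl [Hscl [Hsexp _]]] [Htl Hiota]]]].
  split.
  - apply (faithful_of HS Hsl). intros T E HT Hpl _ _ k.
    exact (@key _ _ _ HS HSh Hsl Hscl Hsexp _ _ HT Hpl k).
  - apply (faithful_of HS Htl). intros T E HT Hpl HE HTf k.
    destruct (Hiota E HE) as [eE _]. destruct (Hiota T HTf) as [eT _].
    rewrite <- eE, <- eT in k.
    exact (@key _ _ _ HS HSh Hsl Hscl Hsexp _ _ HT Hpl k).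
Qed.
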